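(* Let $S_{r,N}$ be an atomic exponential Puiseux semiring. Then $\rho(S_{r,N})=1$ if $r\in\mathbb{N}$, and $\rho(S_{r,N})=\infty$ if $r\notin\mathbb{N}$.
   Context: A numerical monoid $N$ is an additive submonoid of $\mathbb{N}=\{0,1,2,\dots\}$ with finite complement. The exponential Puiseux semiring $S_{r,N}$ ($r\in\mathbb{Q}_{>0}$) is the additive submonoid of $\mathbb{Q}_{\ge0}$ generated by $\{r^k:k\in N\}$. For an atomic monoid $M$ with sets of lengths $\mathsf{L}(x)$, set $\rho(0)=1$, $\rho(x)=\sup\mathsf{L}(x)/\inf\mathsf{L}(x)$ for $x\neq0$, and the elasticity $\rho(M)=\sup\{\rho(x):x\in M\}$. *)

(* Defs.v *)
From HB Require Import structures.
From mathcomp Require Import all_boot all_order all_algebra.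
From mathcomp Require Import all_classical all_reals ereal Rstruct.
Set Implicit Arguments. Unset Strict Implicit. Unset Printing Implicit Defensive.
Import Order.TTheory GRing.Theory Num.Theory.
Local Open Scope classical_set_scope.
Local Open Scope ring_scope.

Definition numerical_monoid (N : set nat) : Prop :=
  N 0%N /\ (forall a b, N a -> N b -> N (a + b)%N) /\
  (exists b : nat, forall n, (b <= n)%N -> N n).

Definition puiseux_exp (r : rat) (N : set nat) : set rat :=
  [set x | exists s : seq nat, (forall k, k \in s -> N k) /\
                               x = \sum_(k <- s) r ^+ k].

(* Atoms of a submonoid M of (Q_{>=0},+) (its only unit is 0). *)
Definition is_atom (M : set rat) (a : rat) : Prop :=
  M a /\ a != 0 /\
  (forall b c, M b -> M c -> a = b + c -> b = 0 \/ c = 0).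

Definition atomic (M : set rat) : Prop :=
  forall x, M x -> x != 0 ->
    exists s : seq rat, (forall a, a \in s -> is_atom M a) /\ x = \sum_(a <- s) a.

Definition lengths (M : set rat) (x : rat) : set nat :=
  [set n | exists s : seq rat, size s = n /\
           (forall a, a \in s -> is_atom M a) /\ x = \sum_(a <- s) a].

Local Open Scope ereal_scope.

Definition elasticity_elt (M : set rat) (x : rat) : \bar Rdefinitions.R :=
  if x == 0%R then 1
  else ereal_sup [set (n%:R)%:E | n in lengths M x] /
       ereal_inf [set (n%:R)%:E | n in lengths M x].

Definition elasticity (M : set rat) : \bar Rdefinitions.R :=
  ereal_sup [set elasticity_elt M x | x in M].

(* Main.v *)
Require Import Defs.
From mathcomp Require Import all_boot all_order all_algebra.
From mathcomp Require Import all_classical all_reals ereal Rstruct.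
From mathcomp Require Import zify ring lra.
Import Order.TTheory GRing.Theory Num.Theory.
Local Open Scope ring_scope.
Set Implicit Arguments.

Lemma ps_nseq (r : rat) (m j : nat) :
  \sum_(k <- nseq m j) r ^+ k = r ^+ j *+ m.
Proof. elim: m => [|m IH]; first by rewrite big_nil. by rewrite /= big_cons IH mulrS. Qed.

Lemma ps_ge0 (r : rat) (N : set nat) x : 0 < r -> puiseux_exp r N x -> 0 <= x.
Proof.
move=> r0 [s [_ ->]]; apply: sumr_ge0 => k _; exact: exprn_ge0 (ltW r0).
Qed.

Lemma ps_nseq_mem (r : rat) (N : set nat) j m : N j -> puiseux_exp r N (r ^+ j *+ m).
Proof.
move=> Nj; exists (nseq m j); split; last by rewrite ps_nseq.
by move=> k; rewrite mem_nseq => /andP[_ /eqP ->].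
Qed.

Lemma ps_gen (r : rat) (N : set nat) j : N j -> puiseux_exp r N (r ^+ j).
Proof. by move=> Nj; have := @ps_nseq_mem r N j 1%N Nj; rewrite mulr1n. Qed.

Lemma atom_gen (r : rat) (N : set nat) a : 0 < r -> is_atom (puiseux_exp r N) a ->
  exists k, N k /\ a = r ^+ k.
Proof.
move=> r0 [[s [Ns ->]] [nz At]].
case: s Ns nz At => [|k s] Ns nz At; first by rewrite big_nil eqxx in nz.
rewrite big_cons in At *.
have Nk : N k by apply: Ns; rewrite inE eqxx.
have Ss : puiseux_exp r N (\sum_(j <- s) r ^+ j).
  by exists s; split => // j js; apply: Ns; rewrite inE js orbT.
case: (At (r ^+ k) (\sum_(j <- s) r ^+ j) (@ps_gen r N k Nk) Ss erefl).
- by move/eqP; rewrite expf_eq0 (gt_eqF r0) andbF.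
- by move=> ->; exists k; rewrite addr0.
Qed.
Lemma int_atom (n : nat) (N : set nat) a : N 0%N -> 0 < (n%:R : rat) ->
  is_atom (puiseux_exp n%:R N) a -> a = 1.
Proof.
move=> N0 r0 At; have [k [Nk ak]] := atom_gen r0 At.
move: At => [_ [_ At]].
have e : a = (n ^ k)%:R by rewrite ak natrX.
have [le1|lt1] := leqP (n ^ k) 1.
  have : (0 < n ^ k)%N by rewrite expn_gt0; rewrite ltr0n in r0; rewrite r0.
  by move=> h; rewrite e; have -> : (n ^ k = 1)%N by move: h le1; clear; lia.
have := At ((n%:R : rat) ^+ 0 *+ 1) ((n%:R : rat) ^+ 0 *+ (n ^ k).-1) (@ps_nseq_mem (n%:R) N 0 1 N0)
  (@ps_nseq_mem (n%:R) N 0 (n ^ k).-1 N0).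
rewrite expr0 -mulrnDr e.
have -> : (1 + (n ^ k).-1 = n ^ k)%N by move: lt1; clear; lia.
move=> /(_ erefl) [] /eqP; rewrite pnatr_eq0 => /eqP h; exfalso; move: lt1 h; clear; lia.
Qed.

Lemma sum_ones (s : seq rat) : (forall a, a \in s -> a = 1) ->
  \sum_(a <- s) a = (size s)%:R.
Proof.
elim: s => [|b s IH] h; first by rewrite big_nil.
have hb : b = 1 by apply: h; rewrite inE eqxx.
have hs : forall a, a \in s -> a = 1 by move=> a ain; apply: h; rewrite inE ain orbT.
by rewrite big_cons IH // hb [size _]/= mulrS.
Qed.

Lemma rat_pd (r : rat) : 0 < r -> exists p d : nat,
  [/\ (0 < p)%N, (0 < d)%N, coprime p d & r = p%:R / d%:R].
Proof.
move=> r0; exists `|numq r|%N, `|denq r|%N.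
have np : (0 < numq r)%R by rewrite numq_gt0.
have dp := denq_gt0 r.
split.
- by rewrite absz_gt0 gt_eqF.
- by rewrite absz_gt0 gt_eqF.
- exact: coprime_num_den.
rewrite -{1}(divq_num_den r); congr (_ / _).
  by rewrite -[in LHS](gez0_abs (ltW np)) pmulrn.
by rewrite -[in LHS](gez0_abs (ltW dp)) pmulrn.
Qed.

Lemma pow_mul (p d e k : nat) : (k <= e)%N -> (d != 0)%N ->
  (d%:R ^+ e * (p%:R / d%:R) ^+ k : rat) = (p ^ k * d ^ (e - k))%:R.
Proof.
move=> ke d0; rewrite natrM !natrX expr_div_n -{1}(subnK ke) exprD.
have dn : (d%:R : rat) ^+ k != 0 by rewrite expf_neq0 // pnatr_eq0.
by rewrite -mulrA [_ * (_ / _)]mulrCA divff // mulr1 mulrC.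
Qed.

Lemma noteq (p d e : nat) (s : seq nat) : coprime p d -> (1 < d)%N ->
  (forall k, k \in s -> k < e)%N ->
  ((p%:R / d%:R : rat) ^+ e != \sum_(k <- s) (p%:R / d%:R) ^+ k).
Proof.
move=> cpd d1 hs; case: e hs => [|e] hs.
  case: s hs => [|k s] hs; first by rewrite big_nil expr0 oner_eq0.
  by have := hs k; rewrite inE eqxx => /(_ isT).
apply/negP => /eqP E.
have E2 : ((d%:R : rat) ^+ e * (p%:R / d%:R) ^+ e.+1) =
   (\sum_(k <- s) (p ^ k * d ^ (e - k))%N)%:R.
  rewrite E mulr_sumr natr_sum; apply: eq_big_seq => k ks.
  by rewrite pow_mul //; [have := hs k ks; clear; lia | clear -d1; lia].
set Z := (\sum_(k <- s) _)%N in E2.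
have E3 : (p ^ e.+1)%:R = (Z * d)%:R :> rat.
  rewrite natrM -E2 expr_div_n natrX exprS.
  have dn : (d%:R : rat) != 0 by rewrite pnatr_eq0; clear -d1; lia.
  have dn' : (d%:R : rat) ^+ e != 0 by rewrite expf_neq0.
  rewrite [(d%:R : rat) ^+ e.+1]exprS.
  move: ((d%:R : rat) ^+ e) (p%:R * (p%:R : rat) ^+ e) dn' => D P Dn.
  by field; rewrite Dn dn.
move/eqP: E3; rewrite eqr_nat => /eqP E3.
have dv : (d %| p ^ e.+1)%N by rewrite E3 dvdn_mull.
have cp : coprime d (p ^ e.+1) by rewrite coprimeXr // coprime_sym.
move: cp; rewrite /coprime (gcdn_idPl dv) => /eqP d1'.
by move: d1; rewrite d1'.
Qed.

Lemma term_le (s : seq nat) k (r : rat) : 0 <= r -> k \in s ->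
  r ^+ k <= \sum_(j <- s) r ^+ j.
Proof.
move=> r0 ks; rewrite (perm_big _ (perm_to_rem ks)) big_cons lerDl.
by apply: sumr_ge0 => j _; apply: exprn_ge0.
Qed.

Lemma qr_pow (p d K k : nat) : (0 < p)%N -> (0 < d)%N -> (k <= K)%N ->
  ((d%:R / p%:R) ^+ K * (p%:R / d%:R) ^+ k : rat) = (d%:R / p%:R) ^+ (K - k).
Proof.
move=> p0 d0 kK; rewrite -{1}(subnK kK) exprD -mulrA -exprMn.
have -> : ((d%:R / p%:R) * (p%:R / d%:R) : rat) = 1.
  have pn : (p%:R : rat) != 0 by rewrite pnatr_eq0 -lt0n.
  have dn : (d%:R : rat) != 0 by rewrite pnatr_eq0 -lt0n.
  by field; rewrite pn dn.
by rewrite expr1n mulr1.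
Qed.

Lemma gen_atom (p d n : nat) (N : set nat) : coprime p d -> (1 < d)%N -> (1 < p)%N ->
  N n -> is_atom (puiseux_exp (p%:R / d%:R) N) ((p%:R / d%:R) ^+ n).
Proof.
move=> cpd d1 p1 Nn; set r : rat := p%:R / d%:R.
have r0 : 0 < r by rewrite /r divr_gt0 // ltr0n; clear -d1 p1; lia.
split; first exact: ps_gen.
split; first by rewrite expf_neq0 // gt_eqF.
move=> b c [s1 [N1 ->]] [s2 [N2 ->]] E.
set B := \sum_(k <- s1) r ^+ k in E *; set C := \sum_(k <- s2) r ^+ k in E *.
have [b0|b0] := eqVneq B 0; first by left.
have [c0|c0] := eqVneq C 0; first by right.
exfalso.
have B0 : 0 <= B by apply: sumr_ge0 => j _; apply: exprn_ge0; apply: ltW.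
have C0 : 0 <= C by apply: sumr_ge0 => j _; apply: exprn_ge0; apply: ltW.
have lt : forall k, k \in s1 ++ s2 -> r ^+ k < r ^+ n.
  move=> k; rewrite mem_cat => /orP [ks|ks].
    have := @term_le s1 k r (ltW r0) ks; rewrite -/B E => h.
    by apply: (le_lt_trans h); rewrite ltrDl lt0r c0.
  have := @term_le s2 k r (ltW r0) ks; rewrite -/C E => h.
  by apply: (le_lt_trans h); rewrite ltrDr lt0r b0.
have E' : r ^+ n = \sum_(k <- s1 ++ s2) r ^+ k by rewrite big_cat.
set s := s1 ++ s2 in lt E'.
case: (ltgtP r 1) => r1.
- have hs : forall k, k \in s -> (n < k)%N.
    by move=> k ks; rewrite -(ltr_iXn2l r0 r1); apply: lt.
  set K := maxn n (\max_(k <- s) k).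
  have kK : forall k, k \in s -> (k <= K)%N.
    move=> k ks; apply: leq_trans (leq_maxr _ _).
    by apply: (@leq_bigmax_seq _ _ xpredT (fun k => k)).
  have nK : (n <= K)%N by apply: leq_maxl.
  have p0 : (0 < p)%N by clear -p1; lia.
  have d0 : (0 < d)%N by clear -d1; lia.
  have cdp : coprime d p by rewrite coprime_sym.
  have := @noteq d p (K - n)%N (map (fun k => (K - k)%N) s) cdp p1.
  rewrite big_map.
  have -> : \sum_(i <- s) (d%:R / p%:R) ^+ (K - i)%N =
            (d%:R / p%:R) ^+ K * \sum_(i <- s) r ^+ i :> rat.
    rewrite mulr_sumr; apply: eq_big_seq => k ks.
    by rewrite qr_pow // kK.
  rewrite -E' qr_pow // eqxx => h; suff : false by [].
  apply: h => j /mapP [k ks ->].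
  by have := hs k ks; have := kK k ks; clear; lia.
- have hs : forall k, k \in s -> (k < n)%N.
    by move=> k ks; rewrite -(ltr_eXn2l r1); apply: lt.
  by have := @noteq p d n s cpd d1 hs; rewrite -E' eqxx.
- have dn : (d%:R : rat) != 0 by rewrite pnatr_eq0; clear -d1; lia.
  move: r1; rewrite /r => /(congr1 (fun x => x * d%:R)); rewrite mulfVK // mul1r.
  move/eqP; rewrite eqr_nat => /eqP pd.
  by move: cpd; rewrite pd /coprime gcdnn => /eqP d1'; move: d1; rewrite d1'.
Qed.

Lemma not_atomic1 (d c : nat) (N : set nat) : (1 < d)%N ->
  (forall n, (c <= n)%N -> N n) -> ~ atomic (puiseux_exp (1%:R / d%:R) N).
Proof.
move=> d1 hc At; set r : rat := 1%:R / d%:R.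
have dn : (d%:R : rat) != 0 by rewrite pnatr_eq0; clear -d1; lia.
have r0 : 0 < r by rewrite /r divr_gt0 // ltr0n; clear -d1; lia.
have r1 : r < 1 by rewrite /r ltr_pdivrMr ?mul1r ?ltr0n ?ltr1n //; clear -d1; lia.
have Sx : puiseux_exp r N (r ^+ c) by apply: ps_gen; apply: hc.
have x0 : r ^+ c != 0 by rewrite expf_neq0 // gt_eqF.
have [s [As xe]] := At _ Sx x0.
case: s As xe => [|a s] As xe; first by move: x0; rewrite xe big_nil eqxx.
have Aa : is_atom (puiseux_exp r N) a by apply: As; rewrite inE eqxx.
have [k [Nk ak]] := atom_gen r0 Aa.
have kc : (k < c)%N.
  rewrite ltnNge; apply/negP => ck.
  have Nk1 : N k.+1 by apply: hc; apply: leq_trans ck _.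
  have id : r ^+ k = r ^+ k.+1 *+ 1 + r ^+ k.+1 *+ d.-1.
    rewrite -mulrnDr add1n prednK; last by clear -d1; lia.
    rewrite exprSr -mulrnAr.
    have -> : r *+ d = 1.
      by rewrite /r -[_ *+ d]mulr_natr mulfVK.
    by rewrite mulr1.
  move: Aa => [_ [_ AA]].
  have nz : forall m, (0 < m)%N -> r ^+ k.+1 *+ m != 0.
    by move=> m m0; rewrite mulrn_eq0 negb_or -lt0n m0 expf_neq0 // gt_eqF.
  case: (AA _ _ (@ps_nseq_mem r N k.+1 1 Nk1) (@ps_nseq_mem r N k.+1 d.-1 Nk1)).
  - by rewrite ak {1}id.
  - by move/eqP; rewrite (negbTE (nz 1%N isT)).
  - by move/eqP; rewrite (negbTE (nz _ _)) //; clear -d1; lia.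
have : r ^+ c < a by rewrite ak ltr_iXn2l.
have hs0 : 0 <= \sum_(b <- s) b.
  rewrite big_seq; apply: sumr_ge0 => b bs; have /As [Sb _] : b \in a :: s by rewrite inE bs orbT.
  exact: ps_ge0 r0 Sb.
rewrite {1}xe big_cons => h.
by move: h hs0; set S := \sum_(b <- s) b; clear; move=> h hs0; lra.
Qed.

Lemma bern (v k : nat) : ((v + k) * v ^ k <= v * v.+1 ^ k)%N.
Proof.
elim: k => [|k IH]; first by rewrite !expn0 addn0.
rewrite !expnS; move: IH; set a := (v ^ k)%N; set b := (v.+1 ^ k)%N => IH; nia.
Qed.

Lemma grow (u v m : nat) : (0 < v)%N -> (v < u)%N -> (m * v ^ (m * v) <= u ^ (m * v))%N.
Proof.
move=> v0 vu; set k := (m * v)%N.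
have h1 := bern v k.
have h2 : (v.+1 ^ k <= u ^ k)%N by elim: (k) => [|j IH]; rewrite ?expnS ?leq_mul.
have h3 : (k * v ^ k <= v * u ^ k)%N :=
  leq_trans (leq_mul (leq_addl v k) (leqnn _)) (leq_trans h1 (leq_mul (leqnn v) h2)).
rewrite -(leq_pmul2l v0) mulnA [(v * m)%N]mulnC.
exact: h3.
Qed.

Lemma sum_nseq_rat (m : nat) (y : rat) : \sum_(a <- nseq m y) a = y *+ m.
Proof. elim: m => [|m IH]; first by rewrite big_nil. by rewrite /= big_cons IH mulrS. Qed.
Local Open Scope classical_set_scope.
Local Open Scope ereal_scope.

Lemma int_elt (n : nat) (N : set nat) x : N 0%N -> (0 < (n%:R : rat))%R ->
  atomic (puiseux_exp n%:R N) -> puiseux_exp n%:R N x ->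
  elasticity_elt (puiseux_exp n%:R N) x = 1.
Proof.
move=> N0 r0 At Sx; rewrite /elasticity_elt; case: eqP => [//|/eqP x0].
have [s0 [As0 xe]] := At x Sx x0.
have ones : forall s, (forall a, a \in s -> is_atom (puiseux_exp n%:R N) a) ->
    (\sum_(a <- s) a = (size s)%:R)%R.
  by move=> s As; apply: sum_ones => a /As; apply: int_atom.
have L : lengths (puiseux_exp n%:R N) x = [set size s0]%classic.
  apply/seteqP; split => m.
    case=> s [sz [As xe']]; rewrite /= -sz; apply/eqP.
    by rewrite -(eqr_nat rat) -ones // -xe' xe ones.
  by move=> /= ->; exists s0.
have sz0 : (size s0)%:R != 0%R :> Rdefinitions.R.
  rewrite pnatr_eq0; apply/negP => /eqP sz0.
  by move: x0; rewrite xe ones // sz0 eqxx.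
by rewrite L image_set1 ereal_sup1 ereal_inf1 divee // eqe.
Qed.

Lemma int_elast (n : nat) (N : set nat) : N 0%N -> (0 < (n%:R : rat))%R ->
  atomic (puiseux_exp n%:R N) -> elasticity (puiseux_exp n%:R N) = 1.
Proof.
move=> N0 r0 At; rewrite /elasticity.
have -> : [set elasticity_elt (puiseux_exp n%:R N) x | x in puiseux_exp n%:R N] = [set 1]%classic.
  apply/seteqP; split => y.
    by case=> x Sx <-; rewrite /= int_elt.
  move=> /= ->; exists 0%R; last by rewrite /elasticity_elt eqxx.
  by exists [::]; rewrite big_nil.
exact: ereal_sup1.
Qed.

Lemma ratio_le (M : set rat) x (m l1 l2 : nat) : (x != 0)%R ->
  lengths M x l1 -> lengths M x l2 -> (m * l2 <= l1)%N ->
  ((m%:R)%:E <= elasticity_elt M x).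
Proof.
move=> x0 L1 L2 ml; rewrite /elasticity_elt (negbTE x0).
set A := [set (n%:R)%:E | n in lengths M x].
have infge1 : 1 <= ereal_inf A.
  apply/ereal_infP => y [n [s [sz [_ xe]]] <-].
  rewrite lee_fin ler1n lt0n; apply/eqP => n0.
  by move: x0; rewrite xe; move: sz; rewrite n0 => /size0nil ->; rewrite big_nil eqxx.
have infle : ereal_inf A <= (l2%:R)%:E by apply: ereal_inf_lbound; exists l2.
have supge : (l1%:R)%:E <= ereal_sup A by apply: ereal_sup_ubound; exists l1.
move: infge1 infle; case: (ereal_inf A) => [i| |] //; rewrite !lee_fin => i1 il2.
have i0 : (0 < i)%R by apply: lt_le_trans i1.
rewrite inver (gt_eqF i0) lee_pdivlMr // (le_trans _ supge) // -EFinM lee_fin.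
apply: (le_trans (y := (m%:R * l2%:R)%R)).
  by apply: ler_wpM2l.
by rewrite -natrM ler_nat.
Qed.

Lemma sup_pinfty (A : set (\bar Rdefinitions.R)) :
  (forall m : nat, (m%:R)%:E <= ereal_sup A) -> ereal_sup A = +oo.
Proof.
move=> h; move: h; case: (ereal_sup A) => [s| |] // h.
  have := h (Num.Def.archi_bound `|s|%R); rewrite lee_fin => hs.
  have := archi_boundP (normr_ge0 s) => hb.
  have := ler_norm s => hn.
  by have := lt_le_trans (le_lt_trans hn hb) hs; rewrite ltxx.
by have := h 0%N.
Qed.
Local Open Scope ring_scope.

Lemma nonint_elast (p d c : nat) (N : set nat) : coprime p d -> (1 < d)%N -> (1 < p)%N ->
  (forall n, (c <= n)%N -> N n) ->
  elasticity (puiseux_exp (p%:R / d%:R) N) = +oo%E.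
Proof.
move=> cpd d1 p1 hc; apply: sup_pinfty => m.
set r : rat := p%:R / d%:R.
set S := puiseux_exp r N.
have dn : (d%:R : rat) != 0 by rewrite pnatr_eq0; clear -d1; lia.
have r0 : (0 < r)%R by rewrite /r divr_gt0 // ltr0n; clear -d1 p1; lia.
set v := minn p d; set u := maxn p d.
set k := (m * v)%N.
set x := r ^+ c *+ (p ^ k)%N.
have xe : x = r ^+ (c + k) *+ (d ^ k)%N.
  have rk : r ^+ k *+ (d ^ k)%N = (p ^ k)%N%:R :> rat.
    by rewrite /r expr_div_n -mulr_natr !natrX mulfVK // expf_neq0.
  by rewrite /x exprD -mulrnAr rk mulr_natr.
have Sx : S x by apply: ps_nseq_mem; apply: hc.
have x0 : x != 0%R.
  have pk : (0 < p ^ k)%N by rewrite expn_gt0; clear -p1; apply/orP; left; lia.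
  have rc : r ^+ c != 0 by rewrite expf_neq0 // gt_eqF.
  by rewrite /x mulrn_eq0 negb_or rc -lt0n pk.
have L1 : lengths S x (p ^ k)%N.
  exists (nseq (p ^ k)%N (r ^+ c)); split; first by rewrite size_nseq.
  split; last by rewrite sum_nseq_rat.
  by move=> a; rewrite mem_nseq => /andP[_ /eqP ->]; apply: gen_atom => //; apply: hc.
have L2 : lengths S x (d ^ k)%N.
  exists (nseq (d ^ k)%N (r ^+ (c + k))); split; first by rewrite size_nseq.
  split; last by rewrite sum_nseq_rat.
  move=> a; rewrite mem_nseq => /andP[_ /eqP ->]; apply: gen_atom => //; apply: hc.
  by apply: leq_addr.
have pd : p != d.
  apply/eqP => pd; move: cpd; rewrite pd /coprime gcdnn => /eqP d1'.
  by move: d1; rewrite d1'.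
have H : ((m%:R)%:E <= elasticity_elt S x)%E.
  case: (ltngtP p d) => [lt|lt|eq]; last by rewrite eq eqxx in pd.
  - apply: (@ratio_le S x m (d ^ k)%N (p ^ k)%N x0 L2 L1).
    have hv : minn p d = p by apply/minn_idPl; apply: ltnW.
    by rewrite /k /v hv; apply: grow => //; clear -p1; lia.
  - apply: (@ratio_le S x m (p ^ k)%N (d ^ k)%N x0 L1 L2).
    have hv : minn p d = d by apply/minn_idPr; apply: ltnW.
    by rewrite /k /v hv; apply: grow => //; clear -d1; lia.
apply: le_trans H _; apply: ereal_sup_ubound; by exists x.
Qed.

Unset Implicit Arguments.
Local Open Scope ring_scope.
Local Open Scope ereal_scope.

Theorem mainTheorem6 (r : rat) (N : set nat) :
  (0 < r)%R -> numerical_monoid N -> atomic (puiseux_exp r N) ->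
  ((exists n : nat, r = n%:R) -> elasticity (puiseux_exp r N) = 1) /\
  (~ (exists n : nat, r = n%:R) -> elasticity (puiseux_exp r N) = +oo).
Proof.
move=> r0 [N0 [_ [c hc]]] At; split.
  by move=> [n rn]; subst r; exact: int_elast N0 r0 At.
move=> nint; have [p [d [p0 d0 cpd re]]] := rat_pd r r0.
have d1 : (1 < d)%N.
  case: d d0 cpd re => [|[|d]] // _ _ re.
  by exfalso; apply: nint; exists p; rewrite re divr1.
subst r.
have [p1|p1] := eqVneq p 1%N.
  subst p; exfalso; exact: (@not_atomic1 d c N d1 hc At).
have p2 : (1 < p)%N by clear -p0 p1; lia.
exact: (@nonint_elast p d c N cpd d1 p2 hc).
Qed.
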